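(* Let $\mathbb{F}\in\{\mathbb{R},\mathbb{C}\}$, let $A$ be an $n\times m$ matrix over $\mathbb{F}$, let $\rho=\|A\|_{1,\infty}$ be the largest absolute value of the entries of $A$, and suppose every entry of $A$ of absolute value $\rho$ is the only nonzero element of its row and of its column. Let $C$ be obtained from $A$ by replacing all entries of absolute value $\rho$ by $0$ (so $\|C\|_{1,\infty}<\rho$). If $p\in(1,\infty]$ and $q\in[1,\infty)$ satisfy $p\le q$ and $$m^{1-(1/p)}\,n^{1/q}\,\|C\|_{1,\infty}\le\rho,$$ then $A\in\mathcal{E}_{1,\infty}(p,q)$. This inequality is satisfied if $p$ is sufficiently close to $1$ and $q$ is sufficiently large.
   Context: $\|x\|_p$ is the Hölder $\ell_p$ norm; $\|A\|_{p,q}=\max_{x\in\mathbb{F}^m,x\ne0}\|Ax\|_q/\|x\|_p$ (for real $A$ one may use $\mathbb{F}=\mathbb{R}$ or $\mathbb{C}$); $1/\infty=0$. For $p\in(1,\infty]$, $q\in[1,\infty)$, $\mathcal{E}_{1,\infty}(p,q)$ is the set of $n\times m$ matrices $A$ with $\|A\|_{r,s}=\|A\|_{p,q}$ for all $r\in[1,p)$ and $s\in(q,\infty]$. *)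

(* Defs.v *)
From mathcomp Require Import all_boot all_order all_algebra.
From mathcomp Require Import all_classical all_reals all_analysis.
From mathcomp Require Import complex.
Set Implicit Arguments. Unset Strict Implicit. Unset Printing Implicit Defensive.
Import Order.TTheory GRing.Theory Num.Theory.
Local Open Scope ring_scope.
Local Open Scope classical_set_scope.

(* Exponents p live in the extended reals \bar R (p = +oo allowed).
   1/p as a real number, with the convention 1/+oo = 0. *)
Definition einv (R : realType) (p : \bar R) : R :=
  match p with EFin r => r^-1 | _ => 0 end.

(* Hölder l_p norm of the vector of absolute values v = (|x_1|,...,|x_k|):
   (\sum_i v_i^p)^(1/p) for finite p, max_i v_i for p = +oo.
   (The value for p = -oo is irrelevant and never used.) *)
Definition lpnorm (R : realType) (k : nat) (p : \bar R) (v : 'I_k -> R) : R :=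
  match p with
  | EFin r => (\sum_(i < k) v i `^ r) `^ r^-1
  | _ => \big[Num.max/0]_(i < k) v i
  end.

(* Operator norm ||A||_{p,q} = max_{x <> 0} ||Ax||_q / ||x||_p over F^m,
   where ab : F -> R is the absolute value of the scalar field F.
   (The max is attained, so it is written as a supremum.) *)
Definition opnorm (R : realType) (F : pzRingType) (ab : F -> R) (n m : nat)
  (A : 'M[F]_(n, m)) (p q : \bar R) : R :=
  sup [set lpnorm q (fun i => ab ((A *m x) i 0)) / lpnorm p (fun j => ab (x j 0))
      | x in [set x : 'cV[F]_m | x != 0]].

Definition E1inf (R : realType) (F : pzRingType) (ab : F -> R) (n m : nat)
  (p : \bar R) (q : R) (A : 'M[F]_(n, m)) : Prop :=
  forall (r : R) (s : \bar R), 1 <= r -> (r%:E < p)%E -> (q%:E < s)%E ->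
    opnorm ab A r%:E s = opnorm ab A p q%:E.

Definition absR (R : realType) (x : R) : R := `|x|.
Definition absC (R : realType) (z : R[i]) : R := Normc.normc z.

Definition dropmax (R : realType) (F : pzRingType) (ab : F -> R) (n m : nat)
  (A : 'M[F]_(n, m)) (rho : R) : 'M[F]_(n, m) :=
  \matrix_(i, j) (if ab (A i j) == rho then 0 else A i j).

Definition Thm6 (R : realType) (F : pzRingType) (ab : F -> R) (n m : nat)
  (A : 'M[F]_(n, m)) : Prop :=
  let rho := opnorm ab A 1%:E +oo%E in
  let C := dropmax ab A rho in
  (forall i j, ab (A i j) = rho ->
     (forall j', j' != j -> A i j' = 0) /\ (forall i', i' != i -> A i' j = 0)) ->
  (forall (p : \bar R) (q : R), (1%:E < p)%E -> 1 <= q -> (p <= q%:E)%E ->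
     (m%:R) `^ (1 - einv p) * (n%:R) `^ (q^-1) * opnorm ab C 1%:E +oo%E <= rho ->
     E1inf ab p q A)
  /\
  (exists p0 : R, 1 < p0 /\ exists q0 : R,
     forall p q : R, 1 < p -> p <= p0 -> q0 <= q ->
       (m%:R) `^ (1 - p^-1) * (n%:R) `^ (q^-1) * opnorm ab C 1%:E +oo%E <= rho).

(* Main.v *)
Require Import Defs.
From mathcomp Require Import all_boot all_order all_algebra.
From mathcomp Require Import all_classical all_reals all_analysis.
From mathcomp Require Import complex.
Set Implicit Arguments. Unset Strict Implicit. Unset Printing Implicit Defensive.
Import Order.TTheory GRing.Theory Num.Theory.

Section Aux.
Context (R : realType).
Local Open Scope ring_scope.

Lemma bmax_ge0 k (v : 'I_k -> R) : 0 <= \big[Num.max/0]_(i < k) v i.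
Proof. exact: bigmax_ge_id. Qed.

Lemma lp_ge0 k p (v : 'I_k -> R) : 0 <= lpnorm p v.
Proof. case: p => [r||] /=; [exact: powR_ge0| exact: bmax_ge0 ..]. Qed.

Lemma lp1 k (v : 'I_k -> R) : (forall i, 0 <= v i) ->
  lpnorm 1%:E v = \sum_i v i.
Proof.
move=> v0 /=; rewrite invr1 (eq_bigr v) => [|i _]; last by rewrite powRr1.
by rewrite powRr1 //; apply: sumr_ge0.
Qed.

Lemma lp_zero k p (v : 'I_k -> R) : (forall i, v i = 0) -> (0 < p)%E ->
  lpnorm p v = 0.
Proof.
move=> v0; case: p => [r||] //= r0.
  rewrite big1 ?powR0 // ?invr_eq0 ?gt_eqF // => i _.
  by rewrite v0 powR0 // gt_eqF.
by apply: bigmax_eq_id => i _; rewrite v0.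
Qed.

Lemma lp_ind k p (c : R) (i0 : 'I_k) : 0 <= c -> (0 < p)%E ->
  lpnorm p (fun i => if i == i0 then c else 0) = c.
Proof.
move=> c0; case: p => [r||] //= r0.
  rewrite (bigD1 i0) //= eqxx big1 ?addr0; last first.
    by move=> i /negbTE ->; rewrite powR0 // gt_eqF.
  by rewrite -powRrM mulfV ?gt_eqF // powRr1.
apply/le_anti/andP; split.
  by apply: bigmax_le => // i _; case: ifP.
by apply: le_trans (le_bigmax _ _ i0); rewrite eqxx.
Qed.

Lemma le_lp k p (v : 'I_k -> R) j : (0 < p)%E -> (forall i, 0 <= v i) ->
  v j <= lpnorm p v.
Proof.
move=> + v0; case: p => [r||] //= r0; last exact: le_bigmax.
have -> : v j = (v j `^ r) `^ r^-1 by rewrite -powRrM mulfV ?gt_eqF // powRr1.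
apply: ge0_ler_powR; rewrite ?nnegrE ?powR_ge0 //.
- by rewrite invr_ge0 ltW.
- by apply: sumr_ge0 => i _; apply: powR_ge0.
rewrite (bigD1 j) //= lerDl; apply: sumr_ge0 => i _; exact: powR_ge0.
Qed.

Lemma lp_gt0 k p (v : 'I_k -> R) j : (0 < p)%E -> (forall i, 0 <= v i) ->
  0 < v j -> 0 < lpnorm p v.
Proof. by move=> p0 v0 vj; apply: lt_le_trans vj (le_lp _ _ _). Qed.

Lemma pw_sup (t a S : R) : 1 <= t -> 0 <= a -> a <= S -> 0 < S ->
  a `^ t <= a / S * S `^ t.
Proof.
move=> t1 a0 aS S0.
have t0 : 0 < t by apply: lt_le_trans t1.
have [->|an0] := eqVneq a 0; first by rewrite powR0 ?gt_eqF // !mul0r.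
have aS0 : 0 < a / S by rewrite divr_gt0 // lt_neqAle eq_sym an0.
have -> : a `^ t = (a / S) `^ t * S `^ t.
  by rewrite -powRM ?divfK ?gt_eqF ?ltW.
rewrite ler_wpM2r ?powR_ge0 // ge1r_powR // aS0 /= ler_pdivrMr // mul1r //.
Qed.

Lemma superadd k (t : R) (a : 'I_k -> R) : 1 <= t -> (forall i, 0 <= a i) ->
  \sum_i a i `^ t <= (\sum_i a i) `^ t.
Proof.
move=> t1 a0; have t0 : 0 < t by apply: lt_le_trans t1.
have S0 : 0 <= \sum_i a i by apply: sumr_ge0.
have [SE|Sn0] := eqVneq (\sum_i a i) 0.
  rewrite SE big1 ?powR_ge0 // => i _.
  by rewrite (psumr_eq0P (fun i _ => a0 i) SE) // powR0 // gt_eqF.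
have Sp : 0 < \sum_i a i by rewrite lt_neqAle eq_sym Sn0.
apply: (@le_trans _ _ (\sum_i (a i / (\sum_i a i) * (\sum_i a i) `^ t))).
  apply: ler_sum => i _; apply: pw_sup => //.
  by rewrite (bigD1 i) //= lerDl; apply: sumr_ge0.
by rewrite -mulr_suml -mulr_suml mulfV ?mul1r.
Qed.

Lemma superadd2 (t a b : R) : 1 <= t -> 0 <= a -> 0 <= b ->
  a `^ t + b `^ t <= (a + b) `^ t.
Proof.
move=> t1 a0 b0; have t0 : 0 < t by apply: lt_le_trans t1.
have [ab0|abn0] := eqVneq (a + b) 0.
  move/eqP: ab0; rewrite paddr_eq0 // => /andP[/eqP-> /eqP->].
  by rewrite addr0 powR0 ?gt_eqF // addr0.
have abp : 0 < a + b by rewrite lt_neqAle eq_sym abn0 addr_ge0.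
apply: le_trans (lerD (pw_sup t1 a0 _ abp) (pw_sup t1 b0 _ abp)) _.
- by rewrite lerDl.
- by rewrite lerDr.
by rewrite -mulrDl -mulrDl mulfV ?gt_eqF // mul1r.
Qed.


Lemma powRV (x r : R) : 0 <= x -> x^-1 `^ r = (x `^ r)^-1.
Proof. by move=> x0; rewrite -powR_inv1 // -powRrM mulN1r powRN. Qed.

Lemma powmean k (r : R) (w : 'I_k -> R) : 1 <= r -> (forall j, 0 <= w j) ->
  \sum_j w j <= k%:R `^ (1 - r^-1) * (\sum_j w j `^ r) `^ r^-1.
Proof.
move=> r1 w0; have r0 : 0 < r by apply: lt_le_trans r1.
have [->|rn1] := eqVneq r 1.
  rewrite invr1 subrr powRr0 mul1r powRr1; last first.
    by apply: sumr_ge0 => j _; apply: powR_ge0.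
  have -> : \sum_j w j `^ 1 = \sum_j w j by apply: eq_bigr => j _; rewrite powRr1.
  by [].
have r1' : 1 < r by rewrite lt_neqAle eq_sym rn1.
case: k w w0 => [|k] w w0.
  by rewrite big_ord0 mulr_ge0 ?powR_ge0.
set X := \sum_j w j `^ r.
have X0 : 0 <= X by apply: sumr_ge0 => j _; apply: powR_ge0.
have [XE|Xn0] := eqVneq X 0.
  have wE : forall j, w j = 0.
    move=> j; apply: (@powR_eq0_eq0 _ _ r).
    by apply: (psumr_eq0P _ XE) => // i _; exact: powR_ge0.
  by rewrite big1 ?mulr_ge0 ?powR_ge0 // => j _; exact: wE.
have Xp : 0 < X by rewrite lt_neqAle eq_sym Xn0.
set U := X `^ r^-1.
have Up : 0 < U by apply: powR_gt0.
set q := r / (r - 1).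
have qV : q^-1 = 1 - r^-1.
  by rewrite /q invf_div mulrBl divff ?gt_eqF // mul1r.
have q0 : 0 < q by rewrite divr_gt0 // subr_gt0.
set K := k.+1%:R `^ q^-1.
have Kp : 0 < K by apply: powR_gt0; rewrite ltr0n.
have UX : U `^ r = X by rewrite /U -powRrM mulVf ?gt_eqF // powRr1.
have Kk : K `^ q = k.+1%:R.
  by rewrite /K -powRrM mulVf ?gt_eqF // powRr1.
have U0 := ltW Up. have K0 := ltW Kp.
have key : forall j, w j / U * K^-1 <= w j `^ r / X / r + k.+1%:R^-1 / q.
  move=> j.
  have := @conjugate_powR R (w j / U) (K^-1) r q.
  rewrite powRM ?invr_ge0 // powRV // UX powRV // Kk.
  apply; rewrite ?divr_ge0 ?invr_ge0 //.
  by rewrite qV addrC subrK.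
have hs : \sum_j (w j / U * K^-1) <= 1.
  apply: le_trans (ler_sum _ (fun j _ => key j)) _.
  rewrite big_split /= -!mulr_suml -/X mulfV ?gt_eqF // mul1r.
  rewrite sumr_const card_ord -[_ *+ k.+1]mulr_natr mulVf ?pnatr_eq0 // mul1r.
  by rewrite qV addrC subrK.
move: hs; rewrite -!mulr_suml ler_pdivrMr // mul1r ler_pdivrMr // -qV.
by [].
Qed.

End Aux.

Section Main.
Context (R : realType).
Local Open Scope ring_scope.
Variables (n m : nat) (a : 'I_n -> 'I_m -> R) (rho c : R).
Hypotheses (rho0 : 0 < rho) (c0 : 0 <= c) (a0 : forall i j, 0 <= a i j)
 (Hrow : forall i j j', a i j = rho -> j' != j -> a i j' = 0)
 (Hcol : forall i j i', a i j = rho -> i' != i -> a i' j = 0)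
 (Hc : forall i j, a i j != rho -> a i j <= c).

Definition PP i j := a i j == rho.
Definition JJ j := [exists i, PP i j].

Lemma row_fact (u : 'I_m -> R) (u0 : forall j, 0 <= u j) i :
  (exists2 j, PP i j & \sum_k a i k * u k = rho * u j) \/
  \sum_k a i k * u k <= c * \sum_k (if JJ k then 0 else u k).
Proof.
case: (pickP (PP i)) => [j Pij | nP].
  left; exists j => //; rewrite (bigD1 j) //= big1 ?addr0.
    by rewrite (eqP Pij).
  by move=> k kj; rewrite (Hrow (eqP Pij) kj) mul0r.
right; rewrite mulr_sumr; apply: ler_sum => k _; case: ifP => Jk.
  move/existsP: Jk => [i' Pi'k].
  have i'i : i != i'.
    by apply/eqP => e; move: (nP k); rewrite e /= Pi'k.
  by rewrite (Hcol (eqP Pi'k) i'i) mul0r mulr0.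
rewrite ler_wpM2r //; apply: Hc; apply/negP => /eqP e.
by move: Jk; rewrite /JJ; move/negbT/negP; apply; apply/existsP; exists i; apply/eqP.
Qed.

Lemma col_fact (f : 'I_m -> R) j :
  \sum_i (if PP i j then f j else 0) = if JJ j then f j else 0.
Proof.
case: ifP => Jj.
  move/existsP: Jj => [i0 P0]; rewrite (bigD1 i0) //= P0 big1 ?addr0 //.
  move=> i ii0; rewrite ifF //.
  by rewrite /PP (Hcol (eqP P0) ii0) (lt_eqF rho0).
apply: big1 => i _; rewrite ifF //; apply/negbTE; apply: contraFN Jj => Pij.
by apply/existsP; exists i.
Qed.


Lemma UB_fin (r s : R) (u : 'I_m -> R) (y : 'I_n -> R) : 1 <= r -> r <= s ->
  (forall j, 0 <= u j) -> (forall i, 0 <= y i) ->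
  (forall i, y i <= \sum_j a i j * u j) ->
  m%:R `^ (1 - r^-1) * n%:R `^ s^-1 * c <= rho ->
  lpnorm s%:E y <= rho * lpnorm r%:E u.
Proof.
move=> r1 rs u0 y0 yle Hm.
have r0 : 0 < r by apply: lt_le_trans r1.
have s0 : 0 < s by apply: lt_le_trans rs.
have s0' := ltW s0.
set v := fun j => if JJ j then u j else 0.
set w := fun j => if JJ j then 0 else u j.
have v0 : forall j, 0 <= v j by move=> j; rewrite /v; case: ifP.
have w0 : forall j, 0 <= w j by move=> j; rewrite /w; case: ifP.
set X := \sum_j v j `^ r.
set Y := \sum_j w j `^ r.
have X0 : 0 <= X by apply: sumr_ge0 => j _; apply: powR_ge0.
have Y0 : 0 <= Y by apply: sumr_ge0 => j _; apply: powR_ge0.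
set t := r^-1 * s.
have t1 : 1 <= t by rewrite /t mulrC ler_pdivlMr // mul1r.
set S := \sum_j w j.
have S0 : 0 <= S by apply: sumr_ge0.
have h1 : forall i, y i `^ s <=
    \sum_j (if PP i j then (rho * u j) `^ s else 0) + (c * S) `^ s.
  move=> i; case: (row_fact u0 i) => [[j Pij e]|hle].
    apply: (@le_trans _ _ ((rho * u j) `^ s)).
      apply: ge0_ler_powR => //; rewrite ?nnegrE ?mulr_ge0 ?(ltW rho0) //.
      by rewrite -e.
    rewrite -[X in X <= _]addr0 lerD ?powR_ge0 //.
    rewrite (bigD1 j) //= Pij lerDl; apply: sumr_ge0 => k _.
    by case: ifP => // _; apply: powR_ge0.
  apply: (@le_trans _ _ ((c * S) `^ s)).
    apply: ge0_ler_powR => //; rewrite ?nnegrE ?mulr_ge0 //.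
    exact: le_trans (yle i) hle.
  rewrite lerDr; apply: sumr_ge0 => k _.
  by case: ifP => // _; apply: powR_ge0.
have h2 : \sum_i y i `^ s <=
    \sum_j (if JJ j then (rho * u j) `^ s else 0) + n%:R * (c * S) `^ s.
  apply: le_trans (ler_sum _ (fun i _ => h1 i)) _.
  rewrite big_split /= exchange_big /= sumr_const card_ord mulr_natl.
  rewrite lerD2r le_eqVlt; apply/orP; left; apply/eqP.
  by apply: eq_bigr => j _; apply: (col_fact (fun j => (rho * u j) `^ s)).
have h3 : \sum_j (if JJ j then (rho * u j) `^ s else 0) =
    rho `^ s * \sum_j v j `^ s.
  rewrite mulr_sumr; apply: eq_bigr => j _; rewrite /v; case: ifP => _.
    by rewrite powRM // ltW.
  by rewrite powR0 ?gt_eqF // mulr0.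
have h4 : \sum_j v j `^ s <= X `^ t.
  have -> : \sum_j v j `^ s = \sum_j (v j `^ r) `^ t.
    by apply: eq_bigr => j _; rewrite -powRrM /t mulrA mulfV ?gt_eqF // mul1r.
  by apply: superadd => // j; apply: powR_ge0.
have h5 : n%:R * (c * S) `^ s <= rho `^ s * Y `^ t.
  have hS := powmean r1 w0.
  have nq0 : 0 <= n%:R `^ s^-1 :> R by apply: powR_ge0.
  have mq0 : 0 <= m%:R `^ (1 - r^-1) :> R by apply: powR_ge0.
  have e1 : n%:R `^ s^-1 * c * S <= rho * Y `^ r^-1.
    apply: (@le_trans _ _ (n%:R `^ s^-1 * c * (m%:R `^ (1 - r^-1) * Y `^ r^-1))).
      by rewrite ler_wpM2l // mulr_ge0.
    rewrite mulrA ler_wpM2r ?powR_ge0 //.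
    by rewrite mulrC mulrA.
  have e2 : (n%:R `^ s^-1 * c * S) `^ s <= (rho * Y `^ r^-1) `^ s.
    apply: ge0_ler_powR => //; rewrite nnegrE.
      exact: mulr_ge0 (mulr_ge0 nq0 c0) S0.
    exact: mulr_ge0 (ltW rho0) (powR_ge0 _ _).
  have E1 : (n%:R `^ s^-1 * c * S) `^ s = n%:R * (c * S) `^ s.
    rewrite -mulrA (powRM _ nq0 (mulr_ge0 c0 S0)) -powRrM mulVf ?gt_eqF //.
    by rewrite powRr1 ?ler0n.
  have E2 : (rho * Y `^ r^-1) `^ s = rho `^ s * Y `^ t.
    by rewrite (powRM _ (ltW rho0) (powR_ge0 _ _)) -powRrM.
  by move: e2; rewrite E1 E2.
have h6 := superadd2 t1 X0 Y0.
have h7 : X + Y = \sum_j u j `^ r.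
  rewrite -big_split /=; apply: eq_bigr => j _; rewrite /v /w.
  by case: ifP => _; rewrite powR0 ?gt_eqF // ?addr0 ?add0r.
have Lu : (lpnorm r%:E u) `^ s = (X + Y) `^ t.
  by rewrite h7 /= -powRrM.
have h8 : \sum_i y i `^ s <= (rho * lpnorm r%:E u) `^ s.
  apply: le_trans h2 _; rewrite h3.
  apply: (@le_trans _ _ (rho `^ s * X `^ t + rho `^ s * Y `^ t)).
    apply: lerD; last exact: h5.
    by apply: ler_wpM2l; [exact: powR_ge0 | exact: h4].
  rewrite -mulrDr (powRM _ (ltW rho0) (lp_ge0 _ _)) Lu.
  by apply: ler_wpM2l; [exact: powR_ge0 | exact: h6].
have -> : rho * lpnorm r%:E u = ((rho * lpnorm r%:E u) `^ s) `^ s^-1.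
  by rewrite -powRrM mulfV ?gt_eqF // (powRr1 (mulr_ge0 (ltW rho0) (lp_ge0 _ _))).
rewrite /=; apply: (@ge0_ler_powR R s^-1 _ _ _ _ _ h8).
- by rewrite invr_ge0.
- by rewrite nnegrE; apply: sumr_ge0 => i _; apply: powR_ge0.
- by rewrite nnegrE; apply: powR_ge0.
Qed.


Lemma UB_inf (r : R) (u : 'I_m -> R) (y : 'I_n -> R) : 1 <= r ->
  (forall j, 0 <= u j) -> (forall i, 0 <= y i) ->
  (forall i, y i <= \sum_j a i j * u j) ->
  m%:R `^ (1 - r^-1) * n%:R `^ 0 * c <= rho ->
  lpnorm +oo%E y <= rho * lpnorm r%:E u.
Proof.
move=> r1 u0 y0 yle Hm; rewrite powRr0 mulr1 in Hm.
have r0 : 0 < r by apply: lt_le_trans r1.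
set w := fun j => if JJ j then 0 else u j.
have w0 : forall j, 0 <= w j by move=> j; rewrite /w; case: ifP.
set Y := \sum_j w j `^ r.
set S := \sum_j w j.
have hS : S <= m%:R `^ (1 - r^-1) * Y `^ r^-1 := powmean r1 w0.
have YU : Y `^ r^-1 <= lpnorm r%:E u.
  rewrite /=; apply: (@ge0_ler_powR R r^-1).
  - by rewrite invr_ge0 ltW.
  - by rewrite nnegrE; apply: sumr_ge0 => j _; apply: powR_ge0.
  - by rewrite nnegrE; apply: sumr_ge0 => j _; apply: powR_ge0.
  apply: ler_sum => j _; rewrite /w; case: ifP => _; last exact: lexx.
  by rewrite powR0 ?gt_eqF //; apply: powR_ge0.
rewrite /=; apply: bigmax_le; first exact: mulr_ge0 (ltW rho0) (lp_ge0 r%:E u).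
move=> i _; apply: (le_trans (yle i)).
case: (row_fact u0 i) => [[j Pij ->]|hle].
  by apply: ler_wpM2l; [exact: ltW | exact: (le_lp (p := r%:E) j (r0 : (0 < r%:E)%E) u0)].
apply: (le_trans hle).
apply: (@le_trans _ _ (c * (m%:R `^ (1 - r^-1) * Y `^ r^-1))).
  by apply: ler_wpM2l => //; exact: hS.
rewrite mulrA (mulrC c).
apply: (@le_trans _ _ (rho * Y `^ r^-1)).
  by apply: ler_wpM2r; [exact: powR_ge0 | exact: Hm].
by apply: ler_wpM2l; [exact: ltW | exact: YU].
Qed.

End Main.

Section Small.
Context (R : realType).
Local Open Scope ring_scope.

Lemma small_exps (M N t : R) : 1 <= M -> 1 <= N -> 1 < t ->
  exists p0 : R, 1 < p0 /\ exists q0 : R, forall p q : R, 1 < p -> p <= p0 ->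
    q0 <= q -> M `^ (1 - p^-1) * N `^ q^-1 <= t.
Proof.
move=> M1 N1 t1.
have M0 : 0 < M by apply: lt_le_trans M1.
have N0 : 0 < N by apply: lt_le_trans N1.
have t0 : 0 < t by apply: lt_trans t1.
set K := M * N.
have K1 : 1 <= K by rewrite -[1]mulr1 ler_pM.
have K0 : 0 < K by apply: lt_le_trans K1.
set L := ln t. have L0 : 0 < L := ln_gt0 t1.
set l := ln K. have l0 : 0 <= l := ln_ge0 K1.
set d := L / (l + 1).
have d0 : 0 < d by rewrite divr_gt0 // ltr_wpDl.
set d' := Num.min d (2^-1).
have d'0 : 0 < d' by rewrite lt_min d0 invr_gt0 ltr0n.
have d'h : d' <= 2^-1 by rewrite ge_min lexx orbT.
have d'd : d' <= d by rewrite ge_min lexx.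
have d'1 : d' < 1 by apply: le_lt_trans d'h _; rewrite invf_lt1 ?ltr1n.
have od0 : 0 < 1 - d' by rewrite subr_gt0.
exists (1 - d')^-1; split.
  by rewrite invf_gt1 // ltrBlDr ltrDl.
exists d'^-1 => p q p1 pp0 qq0.
have p0 : 0 < p by apply: lt_trans p1.
have q0 : 0 < q by apply: lt_le_trans qq0; rewrite invr_gt0.
have ha : 1 - p^-1 <= d'.
  have : (1 - d') <= p^-1.
    by rewrite -[1 - d']invrK lef_pV2 ?posrE ?invr_gt0.
  by rewrite lerBlDr addrC -lerBlDr.
have hb : q^-1 <= d' by rewrite -[d']invrK lef_pV2 ?posrE ?invr_gt0.
apply: (@le_trans _ _ (M `^ d' * N `^ d')).
  apply: ler_pM; rewrite ?powR_ge0 //; exact: ler_powR.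
rewrite -(powRM _ (ltW M0) (ltW N0)) -/K.
apply: (@le_trans _ _ (K `^ d)); first exact: ler_powR.
rewrite -ler_ln ?posrE ?powR_gt0 // ln_powR -/l -/L /d.
rewrite mulrAC ler_pdivrMr ?ltr_wpDl // ler_pM2l // lerDl //.
Qed.

End Small.

Section Gen.
Context (R : realType) (F : pzRingType) (ab : F -> R).
Local Open Scope ring_scope.
Hypotheses (ab0 : ab 0 = 0) (ab1 : ab 1 = 1) (abge0 : forall x, 0 <= ab x)
  (abD : forall x y, ab (x + y) <= ab x + ab y)
  (abM : forall x y, ab (x * y) = ab x * ab y)
  (abeq0 : forall x, ab x = 0 -> x = 0).

Lemma ab_sum (I : finType) (f : I -> F) : ab (\sum_i f i) <= \sum_i ab (f i).
Proof.
elim/big_rec2: _ => [|i y1 y2 _ h]; first by rewrite ab0.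
apply: le_trans (abD _ _) _; exact: lerD (lexx _) h.
Qed.

Lemma ab_mulmx n m (A : 'M[F]_(n, m)) (x : 'cV[F]_m) i :
  ab ((A *m x) i 0) <= \sum_j ab (A i j) * ab (x j 0).
Proof.
rewrite mxE; apply: le_trans (ab_sum _) _; apply: ler_sum => j _.
by rewrite abM.
Qed.

Lemma lp_pos m p (x : 'cV[F]_m) : (0 < p)%E -> x != 0 ->
  0 < lpnorm p (fun j => ab (x j 0)).
Proof.
move=> p0 xn0.
have [j xj] : exists j, x j 0 != 0.
  apply/existsP; apply: contraNT xn0 => /existsPn h; apply/eqP/matrixP => j k.
  by rewrite (ord1 k) mxE; apply/eqP; move/negPn: (h j).
apply: (lp_gt0 (j := j)) => //; rewrite lt_neqAle abge0 andbT eq_sym.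
by apply: contra xj => /eqP/abeq0/eqP.
Qed.

Lemma sup_eq (S : set R) v : (forall x, S x -> x <= v) -> S v -> sup S = v.
Proof.
move=> ub Sv; apply/le_anti/andP; split.
  by apply: ge_sup; [exists v | exact: ub].
have hs : has_ubound S by exists v.
exact: (ub_le_sup hs Sv).
Qed.

Lemma sup_eq0 (S : set R) : (forall x, S x -> x = 0) -> sup S = 0.
Proof.
move=> h; case: (pselect (exists x, S x)) => [[x Sx]|nS].
  by apply: sup_eq => [y /h ->|]; [exact: lexx | rewrite -(h x Sx)].
have -> : S = set0.
  by apply/seteqP; split => x // Sx; exfalso; apply: nS; exists x.
exact: sup0.
Qed.

Lemma opnorm_val n m (A : 'M[F]_(n, m)) p q v : (0 < p)%E -> 0 <= v ->
  (forall x : 'cV[F]_m, lpnorm q (fun i => ab ((A *m x) i 0)) <=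
     v * lpnorm p (fun j => ab (x j 0))) ->
  (exists2 x : 'cV[F]_m, x != 0 & lpnorm q (fun i => ab ((A *m x) i 0)) =
     v * lpnorm p (fun j => ab (x j 0))) ->
  opnorm ab A p q = v.
Proof.
move=> p0 v0 ub [x0 x0n e0]; rewrite /opnorm; apply: sup_eq.
  move=> _ [x /= xn0 <-]; rewrite ler_pdivrMr ?lp_pos //; exact: ub.
by exists x0 => //; rewrite e0 mulfK // gt_eqF // lp_pos.
Qed.

Lemma opnorm_zero n m (A : 'M[F]_(n, m)) p q :
  (forall x : 'cV[F]_m, lpnorm q (fun i => ab ((A *m x) i 0)) = 0) ->
  opnorm ab A p q = 0.
Proof. by move=> h; apply: sup_eq0 => _ [x _ <-]; rewrite h mul0r. Qed.

Lemma absdelta m (j0 : 'I_m) :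
  (fun j => ab ((delta_mx j0 (0 : 'I_1) : 'cV[F]_m) j 0)) =
  (fun j => if j == j0 then 1 else 0).
Proof.
apply/funext => j; rewrite mxE eqxx andbT.
by case: eqP => _ /=; rewrite ?mulr1n ?mulr0n ?ab1 ?ab0.
Qed.

Lemma delta_neq0 m (j0 : 'I_m) : (delta_mx j0 (0 : 'I_1) : 'cV[F]_m) != 0.
Proof.
apply/negP => /eqP/matrixP/(_ j0 0); rewrite !mxE !eqxx /= mulr1n => e.
by move: ab1; rewrite e ab0 => /esym/eqP; rewrite oner_eq0.
Qed.

Lemma col_delta n m (A : 'M[F]_(n, m)) j0 i :
  (A *m delta_mx j0 (0 : 'I_1)) i 0 = A i j0.
Proof. by rewrite -colE mxE. Qed.

Lemma opnorm1inf n m (B : 'M[F]_(n, m)) : (0 < n)%N -> (0 < m)%N ->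
  exists i0 j0, opnorm ab B 1%:E +oo%E = ab (B i0 j0) /\
    forall i j, ab (B i j) <= ab (B i0 j0).
Proof.
move=> n0 m0.
pose k0 : ('I_n * 'I_m)%type := (Ordinal n0, Ordinal m0).
case: (@arg_maxP _ _ _ k0 predT (fun k => ab (B k.1 k.2)) isT) => [[i0 j0] _ Hmax].
have Hm : forall i j, ab (B i j) <= ab (B i0 j0).
  by move=> i j; exact: (Hmax (i, j)).
exists i0, j0; split => //.
apply: opnorm_val => //.
- move=> x; rewrite lp1 // /=; apply: bigmax_le.
    by apply: mulr_ge0 => //; apply: sumr_ge0.
  move=> i _; apply: le_trans (ab_mulmx _ _ _) _; rewrite mulr_sumr.
  by apply: ler_sum => j _; apply: ler_wpM2r.
- exists (delta_mx j0 0); first exact: delta_neq0.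
  rewrite absdelta lp_ind // mulr1.
  under eq_fun => i do rewrite col_delta.
  apply/le_anti/andP; split; first by apply: bigmax_le => // i _; exact: Hm.
  exact: (le_bigmax _ (fun i => ab (B i j0)) i0).
Qed.

End Gen.

Section Gen2.
Context (R : realType) (F : pzRingType) (ab : F -> R).
Local Open Scope ring_scope.
Hypotheses (ab0 : ab 0 = 0) (ab1 : ab 1 = 1) (abge0 : forall x, 0 <= ab x)
  (abD : forall x y, ab (x + y) <= ab x + ab y)
  (abM : forall x y, ab (x * y) = ab x * ab y)
  (abeq0 : forall x, ab x = 0 -> x = 0).

Lemma degenerate n m (B : 'M[F]_(n, m)) p q : (n = 0 \/ m = 0)%N ->
  (0 < q)%E -> opnorm ab B p q = 0.
Proof.
move=> h q0; apply: opnorm_zero => x; apply: lp_zero => // i.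
case: h => h; subst.
  by case: i.
by rewrite mxE big_ord0 ab0.
Qed.

Lemma thm6_gen n m (A : 'M[F]_(n, m)) : Thm6 ab A.
Proof.
unfold Thm6; set rho := opnorm ab A 1%:E +oo%E; set C := dropmax ab A rho; move=> Hstr.
have [nm0|[n0 m0]] : (n = 0 \/ m = 0) \/ (0 < n)%N /\ (0 < m)%N.
  case: (posnP n) => [->|n0]; first by left; left.
  by case: (posnP m) => [->|m0]; [left; right | right].
  have r0 : rho = 0 by apply: degenerate => //; apply: ltry.
  split.
    move=> p q _ q1 _ _ r s _ _ qs.
    have s0 : (0 < s)%E.
      by apply: lt_trans qs; rewrite lte_fin; apply: lt_le_trans q1.
    by rewrite !degenerate // lte_fin; apply: lt_le_trans q1.
  exists 2; split; first by rewrite ltr1n.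
  exists 1 => p q _ _ _; rewrite [opnorm ab C _ _]degenerate ?ltry // mulr0 r0.
  exact: lexx.
have [i0 [j0 [rhoE rhoM]]] := opnorm1inf ab0 ab1 abge0 abD abM abeq0 A n0 m0.
have rhoE' : rho = ab (A i0 j0) := rhoE.
have {}rhoM : forall i j, ab (A i j) <= rho by move=> i j; rewrite rhoE'.
set c := opnorm ab C 1%:E +oo%E.
have [i1 [j1 [cE cM]]] := opnorm1inf ab0 ab1 abge0 abD abM abeq0 C n0 m0.
have CE : forall i j, C i j = if ab (A i j) == rho then 0 else A i j.
  by move=> i j; rewrite /C /dropmax mxE.
have rho0 : 0 <= rho by rewrite rhoE'.
have c0 : 0 <= c by rewrite /c cE.
have Hc : forall i j, ab (A i j) != rho -> ab (A i j) <= c.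
  by move=> i j h; have := cM i j; rewrite CE (negbTE h) -cE.
have Hrow : forall i j j', ab (A i j) = rho -> j' != j -> ab (A i j') = 0.
  by move=> i j j' h ne; rewrite ((Hstr i j h).1 j' ne) ab0.
have Hcol : forall i j i', ab (A i j) = rho -> i' != i -> ab (A i' j) = 0.
  by move=> i j i' h ne; rewrite ((Hstr i j h).2 i' ne) ab0.
have cr : c = 0 \/ c < rho.
  rewrite /c cE CE; case: eqP => [_|ne]; first by left; rewrite ab0.
  by right; rewrite lt_neqAle rhoM andbT; apply/eqP.
have part2 : exists p0 : R, 1 < p0 /\ exists q0 : R,
     forall p q : R, 1 < p -> p <= p0 -> q0 <= q ->
       (m%:R) `^ (1 - p^-1) * (n%:R) `^ (q^-1) * c <= rho.
  have [cz|cn0] := eqVneq c 0.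
    exists 2; split; first by rewrite ltr1n.
    by exists 1 => p q _ _ _; rewrite cz mulr0.
  have cp : 0 < c by rewrite lt_neqAle eq_sym cn0 c0.
  have crho : c < rho by case: cr => // h; move: cn0; rewrite h eqxx.
  have := @small_exps R m%:R n%:R (rho / c).
  case; rewrite ?ler1n ?ltr_pdivlMr ?mul1r //.
  move=> p0 [p01 [q0 H]]; exists p0; split => //; exists q0 => p q p1 pp qq.
  apply: (le_trans (ler_wpM2r c0 (H p q p1 pp qq))).
  by rewrite divfK ?gt_eqF //; exact: lexx.
split; last exact: part2.
have [rz|rp] : rho = 0 \/ 0 < rho.
  by case: (eqVneq rho 0) => h; [left | right; rewrite lt_neqAle eq_sym h rho0].
  have Az : forall i j, ab (A i j) = 0.
    by move=> i j; apply/le_anti; rewrite abge0 andbT -rz.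
  have allz : forall p q, (0 < q)%E -> opnorm ab A p q = 0.
    move=> p q q0; apply: opnorm_zero => x; apply: lp_zero => // i.
    apply/le_anti; rewrite abge0 andbT; apply: le_trans (ab_mulmx ab0 abD abM _ _ _) _.
    by rewrite big1 // => j _; rewrite Az mul0r.
  move=> p q _ q1 _ _ r s _ _ qs.
  have s0 : (0 < s)%E.
    by apply: lt_trans qs; rewrite lte_fin; apply: lt_le_trans q1.
  by rewrite !allz // lte_fin; apply: lt_le_trans q1.
have key : forall (r : R) (s : \bar R), 1 <= r -> (r%:E <= s)%E ->
    m%:R `^ (1 - r^-1) * n%:R `^ einv s * c <= rho -> opnorm ab A r%:E s = rho.
  move=> r s r1 rs Hm.
  have r0 : 0 < r by apply: lt_le_trans r1.
  have r0' : (0%:E < r%:E)%E by rewrite lte_fin.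
  have s0 : (0 < s)%E := lt_le_trans r0' rs.
  apply: (opnorm_val abge0 abeq0 r0' rho0).
    move=> x.
    have u0 : forall j, 0 <= ab (x j 0) by move=> j.
    have y0 : forall i, 0 <= ab ((A *m x) i 0) by move=> i.
    have yle := fun i => ab_mulmx ab0 abD abM A x i.
    case: s rs Hm s0 => [s'| |] rs Hm _.
    - rewrite lee_fin in rs.
      exact: (@UB_fin R n m (fun i j => ab (A i j)) rho c rp c0 Hrow Hcol Hc
        r s' _ _ r1 rs u0 y0 yle Hm).
    - exact: (@UB_inf R n m (fun i j => ab (A i j)) rho c rp c0 Hrow Hcol Hc
        r _ _ r1 u0 y0 yle Hm).
    - by rewrite leeNy_eq in rs.
  exists (delta_mx j0 0); first exact: (delta_neq0 ab0 ab1).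
  rewrite (absdelta ab0 ab1) (lp_ind _ ler01 r0') mulr1.
  under eq_fun => i do rewrite col_delta.
  have -> : (fun i => ab (A i j0)) = (fun i => if i == i0 then rho else 0).
    apply/funext => i; case: eqP => [->|/eqP ne]; first by rewrite rhoE'.
    by rewrite ((Hstr i0 j0 (esym rhoE')).2 i ne) ab0.
  exact: (lp_ind _ rho0 s0).
move=> p q p1 q1 pq H r s r1 rlt qs.
case: p p1 pq H rlt => [p'| |] p1 pq H rlt; last 2 first.
- by rewrite leye_eq in pq.
- by move: p1; rewrite lt_neqAle leeNy_eq.
rewrite lte_fin in p1; rewrite lte_fin in rlt; rewrite lee_fin in pq.
have p'1 : 1 <= p' := ltW p1.
have r0 : 0 < r by apply: lt_le_trans r1.
have q0 : 0 < q by apply: lt_le_trans q1.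
have hes : einv s <= q^-1.
  case: s qs => [s'| |] qs /=; last 2 first.
  - by rewrite invr_ge0 ltW.
  - by move: qs; rewrite lt_neqAle leeNy_eq.
  rewrite lte_fin in qs.
  by rewrite lef_pV2 ?posrE // ?(lt_trans q0) // ltW.
have rs : (r%:E <= s)%E.
  apply: ltW; apply: (@lt_trans _ _ q%:E) => //; rewrite lte_fin.
  exact: lt_le_trans rlt pq.
have Hrs : m%:R `^ (1 - r^-1) * n%:R `^ einv s * c <= rho.
  apply: le_trans H; apply: ler_wpM2r; first exact: c0.
  apply: ler_pM; [exact: powR_ge0 | exact: powR_ge0 | |].
    apply: ler_powR; first by rewrite ler1n.
    by rewrite lerB // lef_pV2 ?posrE // ?(lt_le_trans _ p'1) // ltW.
  by apply: ler_powR; first by rewrite ler1n.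
have pq' : (p'%:E <= q%:E)%E by rewrite lee_fin.
by rewrite (key r s r1 rs Hrs) (key p' q%:E p'1 pq' H).
Qed.

End Gen2.

Theorem mainTheorem6 (R : realType) (n m : nat) :
  (forall A : 'M[R]_(n, m), Thm6 (@absR R) A) /\
  (forall A : 'M[R[i]]_(n, m), Thm6 (@absC R) A).
Proof.
split => A.
  apply: thm6_gen; rewrite /absR.
  - exact: normr0.
  - exact: normr1.
  - by move=> x; apply: normr_ge0.
  - by move=> x y; apply: ler_normD.
  - by move=> x y; apply: normrM.
  - by move=> x /eqP; rewrite normr_eq0 => /eqP.
apply: thm6_gen; rewrite /absC.
- exact: Normc.normc0.
- exact: Normc.normc1.
- by move=> [a b]; rewrite /Normc.normc sqrtr_ge0.
- by move=> x y; apply: le_normcD.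
- by move=> x y; apply: Normc.normcM.
- by move=> x; apply: Normc.eq0_normc.
Qed.
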